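(* Let $n\ge2$ be an integer, $x_0,t_0\in\mathbb{R}$, $\beta>0$, $\psi(t,x)=(x-x_0)^2-\beta(t-t_0)^2$, $\ell=\lambda\psi$ with $\lambda\ge 1$, and let $w\in C^\infty(\mathbb{R}^2;\mathbb{R})$. With $I_1(w),I_2(w)$ as defined in the context, one has the pointwise identity $$I_1(w)I_2(w)=\partial_x G+\sum_{m=0}^{n-1}\Big[\frac{n^2}{2}\binom{n-1}{m}\ell_x^{\,2n-2m-2}\ell_{xx}+R_m\Big]|\partial_x^m w|^2,$$ where $G$ is a finite sum of terms of the form $c\,\ell_x^{\,a}\ell_{xx}^{\,b}\,\partial_x^{i}w\,\partial_x^{j}w$ ($c\in\mathbb{R}$, $a,b,i,j\in\mathbb{Z}_{\ge0}$), and each $R_m$ is a polynomial in $\ell_x,\ell_{xx}$ (independent of $w$) such that on every bounded set of $(t,x)$ one has $|R_m|\le C\lambda^{2n-2m-3}$ for a constant $C$ independent of $\lambda\ge1$.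
   Context: $\binom{j}{k}$ denotes the binomial coefficient (zero unless $0\le k\le j$). For a smooth $w$ define $$I_1(w)=\sum_{\substack{j\in[0,n]\\ j\ \text{odd}}}\binom{n}{j}(-1)^{n-j}\ell_x^{\,n-j}\partial_x^j w-\binom{n}{2}\ell_{xx}\sum_{\substack{k\in[0,n-2]\\ k\ \text{even}}}\binom{n-2}{k}(-1)^{n-2-k}\ell_x^{\,n-2-k}\partial_x^k w,$$ $$I_2(w)=\sum_{\substack{k\in[0,n]\\ k\ \text{even}}}\binom{n}{k}(-1)^{n-k}\ell_x^{\,n-k}\partial_x^k w-\binom{n}{2}\ell_{xx}\sum_{\substack{j\in[0,n-2]\\ j\ \text{odd}}}\binom{n-2}{j}(-1)^{n-2-j}\ell_x^{\,n-2-j}\partial_x^j w.$$ (These are the parts of $e^{\ell}\partial_x^n(e^{-\ell}w)$ consisting of the highest-$\lambda$-order terms with odd (resp. even) $x$-derivatives of $w$ plus the next-highest-order terms with even (resp. odd) derivatives.) *)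

(* Defs.v *)
From Stdlib Require Import Reals Lra Lia List.
From Coquelicot Require Import Coquelicot.
Open Scope R_scope.

Fixpoint binom (j k : nat) : nat :=
  match j, k with
  | _, O => 1%nat
  | O, S _ => 0%nat
  | S j', S k' => (binom j' k' + binom j' (S k'))%nat
  end.

Definition Rbinom (j k : nat) : R := INR (binom j k).

Fixpoint sum_up (f : nat -> R) (N : nat) : R :=
  match N with
  | O => 0
  | S N' => sum_up f N' + f N'
  end.

Fixpoint Ck2 (k : nat) (f : R -> R -> R) : Prop :=
  match k with
  | O => forall t x, continuity_2d_pt f t x
  | S k' =>
      (forall t x, continuity_2d_pt f t x) /\
      (forall t x, ex_derive (fun s => f s x) t /\ ex_derive (fun y => f t y) x) /\
      Ck2 k' (fun t x => Derive (fun s => f s x) t) /\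
      Ck2 k' (fun t x => Derive (fun y => f t y) x)
  end.

Definition smooth2 (f : R -> R -> R) : Prop := forall k, Ck2 k f.

Definition psi (x0 t0 beta : R) (t x : R) : R :=
  (x - x0) ^ 2 - beta * (t - t0) ^ 2.

Definition ell (x0 t0 beta lam : R) (t x : R) : R := lam * psi x0 t0 beta t x.

Definition ell_x (x0 t0 beta lam : R) (t x : R) : R :=
  Derive (fun y => ell x0 t0 beta lam t y) x.

Definition ell_xx (x0 t0 beta lam : R) (t x : R) : R :=
  Derive_n (fun y => ell x0 t0 beta lam t y) 2 x.

Definition dxn (w : R -> R -> R) (j : nat) (t x : R) : R :=
  Derive_n (fun y => w t y) j x.

Definition I1 (n : nat) (x0 t0 beta lam : R) (w : R -> R -> R) (t x : R) : R :=
  let lx := ell_x x0 t0 beta lam t x in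
  let lxx := ell_xx x0 t0 beta lam t x in
  sum_up (fun j => if Nat.odd j then
            Rbinom n j * (-1) ^ (n - j) * lx ^ (n - j) * dxn w j t x else 0) (S n)
  - Rbinom n 2 * lxx *
    sum_up (fun k => if Nat.even k then
            Rbinom (n - 2) k * (-1) ^ (n - 2 - k) * lx ^ (n - 2 - k) * dxn w k t x
            else 0) (S (n - 2)).

Definition I2 (n : nat) (x0 t0 beta lam : R) (w : R -> R -> R) (t x : R) : R :=
  let lx := ell_x x0 t0 beta lam t x in
  let lxx := ell_xx x0 t0 beta lam t x in
  sum_up (fun k => if Nat.even k then
            Rbinom n k * (-1) ^ (n - k) * lx ^ (n - k) * dxn w k t x else 0) (S n)
  - Rbinom n 2 * lxx *
    sum_up (fun j => if Nat.odd j then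
            Rbinom (n - 2) j * (-1) ^ (n - 2 - j) * lx ^ (n - 2 - j) * dxn w j t x
            else 0) (S (n - 2)).

(* A G-term (c, a, b, i, j) stands for c * ell_x^a * ell_xx^b * d_x^i w * d_x^j w. *)
Definition Gterm : Type := (R * nat * nat * nat * nat)%type.

Definition Gval (G : list Gterm) (x0 t0 beta lam : R) (w : R -> R -> R) (t x : R) : R :=
  let lx := ell_x x0 t0 beta lam t x in
  let lxx := ell_xx x0 t0 beta lam t x in
  fold_right (fun '(c, a, b, i, j) acc =>
      c * lx ^ a * lxx ^ b * dxn w i t x * dxn w j t x + acc) 0 G.

(* A real polynomial in two variables, as a list of monomials (c, a, b) = c X^a Y^b. *)
Definition poly2 : Type := list (R * nat * nat)%type.

Definition poly2_eval (P : poly2) (X Y : R) : R :=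
  fold_right (fun '(c, a, b) acc => c * X ^ a * Y ^ b + acc) 0 P.

(* Main.v *)
Require Import Defs.
From Stdlib Require Import Reals Lra Lia List.
From Coquelicot Require Import Coquelicot.
Import ListNotations.
Open Scope R_scope.
Local Open Scope bool_scope.
Open Scope R_scope.

Lemma sum_up_ext (f g : nat -> R) N :
  (forall j, (j < N)%nat -> f j = g j) -> sum_up f N = sum_up g N.
Proof. induction N; simpl; intros H; auto. rewrite IHN by (intros; apply H; lia). rewrite (H N) by lia. auto. Qed.

Lemma sum_up_plus (f g : nat -> R) N :
  sum_up (fun j => f j + g j) N = sum_up f N + sum_up g N.
Proof. induction N; simpl; [lra|rewrite IHN; lra]. Qed.

Lemma sum_up_scal (c : R) (f : nat -> R) N :
  sum_up (fun j => c * f j) N = c * sum_up f N.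
Proof. induction N; simpl; [lra|rewrite IHN; lra]. Qed.

Lemma sum_up_zero N : sum_up (fun _ => 0) N = 0.
Proof. induction N; simpl; [lra|rewrite IHN; lra]. Qed.

Lemma sum_up_mult (f g : nat -> R) N M :
  sum_up f N * sum_up g M = sum_up (fun j => sum_up (fun k => f j * g k) M) N.
Proof.
  induction N; simpl. lra. rewrite <- IHN. rewrite sum_up_scal. lra.
Qed.

Lemma sum_up_swap (F : nat -> nat -> R) N M :
  sum_up (fun j => sum_up (fun k => F j k) M) N = sum_up (fun k => sum_up (fun j => F j k) N) M.
Proof.
  induction N; simpl. rewrite sum_up_zero; auto.
  rewrite IHN. rewrite <- sum_up_plus. auto.
Qed.

Lemma sum_up_S_l (f : nat -> R) N :
  sum_up f (S N) = f 0%nat + sum_up (fun j => f (S j)) N.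
Proof. induction N. simpl; lra. change (sum_up f (S (S N))) with (sum_up f (S N) + f (S N)).
  rewrite IHN. simpl. lra. Qed.

Lemma sum_up_rev (f : nat -> R) N :
  sum_up f N = sum_up (fun j => f (N - 1 - j)%nat) N.
Proof.
  induction N. auto.
  rewrite (sum_up_S_l (fun j => f (S N - 1 - j)%nat)). change (sum_up f (S N)) with (sum_up f N + f N).
  rewrite IHN. replace (S N - 1 - 0)%nat with N by lia.
  rewrite Rplus_comm. f_equal. apply sum_up_ext. intros j Hj. f_equal. lia.
Qed.

Lemma sum_up_ind (f : nat -> R) K N :
  sum_up (fun k => if Nat.eqb k K then f k else 0) N = if Nat.ltb K N then f K else 0.
Proof.
  induction N. simpl. destruct (Nat.ltb_spec K 0); [lia|auto].
  change (sum_up (fun k => if Nat.eqb k K then f k else 0) (S N)) with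
    (sum_up (fun k => if Nat.eqb k K then f k else 0) N + (if Nat.eqb N K then f N else 0)).
  rewrite IHN. destruct (Nat.eqb_spec N K); destruct (Nat.ltb_spec K N); destruct (Nat.ltb_spec K (S N));
  subst; try lia; lra.
Qed.

Lemma sum_up_lt (f : nat -> R) K N :
  sum_up (fun j => if Nat.ltb j K then f j else 0) N = sum_up f (Nat.min K N).
Proof.
  induction N; simpl. rewrite Nat.min_0_r. auto.
  rewrite IHN. destruct (Nat.ltb N K) eqn:E.
  apply Nat.ltb_lt in E. replace (Nat.min K (S N)) with (S (Nat.min K N)) by lia.
  replace (Nat.min K N) with N by lia. simpl. auto.
  apply Nat.ltb_ge in E. replace (Nat.min K (S N)) with (Nat.min K N) by lia. lra.
Qed.

Lemma sum_up_trunc (f : nat -> R) K N :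
  (forall j, (K <= j)%nat -> f j = 0) -> (K <= N)%nat -> sum_up f N = sum_up f K.
Proof.
  intros H HK. induction N. replace K with 0%nat by lia. auto.
  destruct (Nat.eq_dec K (S N)). subst; auto.
  simpl. rewrite IHN by lia. rewrite H by lia. lra.
Qed.

Lemma sum_up_add_range (f : nat -> R) N M :
  sum_up f (N + M) = sum_up f N + sum_up (fun j => f (N + j)%nat) M.
Proof. induction M. rewrite Nat.add_0_r; simpl; lra.
  rewrite Nat.add_succ_r. simpl. rewrite IHM. lra. Qed.

Lemma sum_up_pairs (f : nat -> R) K :
  sum_up f (2 * K) = sum_up (fun m => f (2 * m)%nat + f (2 * m + 1)%nat) K.
Proof. induction K. auto. replace (2 * S K)%nat with (S (S (2 * K))) by lia.
  change (sum_up f (S (S (2 * K)))) with (sum_up f (2*K) + f (2*K)%nat + f (S (2*K))).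
  change (sum_up (fun m => f (2 * m)%nat + f (2 * m + 1)%nat) (S K)) with
   (sum_up (fun m => f (2 * m)%nat + f (2 * m + 1)%nat) K + (f (2 * K)%nat + f (2 * K + 1)%nat)).
  rewrite IHK. replace (S (2*K)) with (2*K+1)%nat by lia. lra. Qed.

Lemma sum_inner_diag (F : nat -> nat -> R) j B N :
  sum_up (fun k => if Nat.eqb N (j + k) then F j k else 0) B =
  if Nat.leb j N && Nat.ltb (N - j) B then F j (N - j)%nat else 0.
Proof.
  rewrite (sum_up_ext _ (fun k => if Nat.eqb k (N - j) then (if Nat.leb j N then F j k else 0) else 0)).
  rewrite sum_up_ind. destruct (Nat.leb j N), (Nat.ltb (N-j) B); simpl; auto.
  intros k Hk. destruct (Nat.eqb N (j+k)) eqn:E.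
  apply Nat.eqb_eq in E. rewrite (proj2 (Nat.eqb_eq k (N-j))) by lia.
  rewrite (proj2 (Nat.leb_le j N)) by lia. auto.
  apply Nat.eqb_neq in E. destruct (Nat.eqb k (N-j)) eqn:E2; auto.
  apply Nat.eqb_eq in E2. destruct (Nat.leb j N) eqn:E3; auto.
  apply Nat.leb_le in E3. lia.
Qed.

Lemma sum_up_indicator (v : R) (h : nat) N :
  (h < N)%nat -> sum_up (fun M => if Nat.eqb M h then v else 0) N = v.
Proof. intros H. rewrite (sum_up_ind (fun _ => v)). rewrite (proj2 (Nat.ltb_lt _ _) H). auto. Qed.

Lemma sum_up_antidiag (F : nat -> nat -> R) A B :
  sum_up (fun j => sum_up (fun k => F j k) B) A =
  sum_up (fun N => sum_up (fun j => if Nat.ltb j A && Nat.ltb (N - j) B then F j (N - j)%nat else 0) (S N)) (A + B).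
Proof.
  transitivity (sum_up (fun j => sum_up (fun k => sum_up (fun N => if Nat.eqb N (j + k) then F j k else 0) (A+B)) B) A).
  { apply sum_up_ext; intros j Hj. apply sum_up_ext; intros k Hk.
    symmetry. apply sum_up_indicator. lia. }
  rewrite (sum_up_ext _ (fun j => sum_up (fun N => sum_up (fun k => if Nat.eqb N (j + k) then F j k else 0) B) (A+B))).
  2:{ intros; apply sum_up_swap. }
  rewrite sum_up_swap. apply sum_up_ext. intros N HN.
  rewrite (sum_up_ext _ (fun j => if Nat.leb j N && Nat.ltb (N - j) B then F j (N - j)%nat else 0)).
  2:{ intros; apply sum_inner_diag. }
  rewrite (sum_up_ext (fun j => if Nat.leb j N && Nat.ltb (N - j) B then F j (N - j)%nat else 0)
     (fun j => if Nat.ltb j (S N) then (if Nat.ltb (N - j) B then F j (N - j)%nat else 0) else 0)).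
  2:{ intros j _. destruct (Nat.leb_spec j N); destruct (Nat.ltb_spec j (S N)); simpl; auto; lia. }
  rewrite sum_up_lt.
  rewrite (sum_up_ext (fun j => if Nat.ltb j A && Nat.ltb (N - j) B then F j (N - j)%nat else 0)
     (fun j => if Nat.ltb j A then (if Nat.ltb (N - j) B then F j (N - j)%nat else 0) else 0)).
  2:{ intros j _. destruct (Nat.ltb j A); auto. }
  rewrite sum_up_lt. rewrite Nat.min_comm. auto.
Qed.

Lemma binom_0_r j : binom j 0 = 1%nat.
Proof. destruct j; auto. Qed.

Lemma binom_gt j k : (j < k)%nat -> binom j k = 0%nat.
Proof. revert k; induction j; intros k H; destruct k; simpl; try lia; auto.
  rewrite !IHj by lia. auto. Qed.

Lemma binom_S j k : binom (S j) (S k) = (binom j k + binom j (S k))%nat.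
Proof. reflexivity. Qed.

Lemma binom_absorb n k : (S k * binom (S n) (S k) = S n * binom n k)%nat.
Proof.
  revert k; induction n; intros k.
  - destruct k as [|[|k]]; simpl; lia.
  - destruct k.
    + pose proof (IHn 0%nat). rewrite binom_0_r in *. rewrite binom_S, binom_0_r. lia.
    + rewrite binom_S. rewrite Nat.mul_add_distr_l.
      replace (S (S k) * binom (S n) (S k))%nat with (binom (S n) (S k) + S k * binom (S n) (S k))%nat by lia.
      rewrite IHn, IHn. rewrite (binom_S n k). lia.
Qed.

Lemma Rbinom_gt j k : (j < k)%nat -> Rbinom j k = 0.
Proof. intros; unfold Rbinom; rewrite binom_gt; auto. Qed.
Lemma Rbinom_0 j : Rbinom j 0 = 1.
Proof. unfold Rbinom; rewrite binom_0_r; auto. Qed.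
Lemma Rbinom_S j k : Rbinom (S j) (S k) = Rbinom j k + Rbinom j (S k).
Proof. unfold Rbinom; rewrite binom_S, plus_INR; auto. Qed.
Lemma Rbinom_absorb n k : INR (S k) * Rbinom (S n) (S k) = INR (S n) * Rbinom n k.
Proof. unfold Rbinom. rewrite <- !mult_INR, binom_absorb. auto. Qed.
Lemma Rbinom_ge0 j k : 0 <= Rbinom j k.
Proof. apply pos_INR. Qed.

Definition fa (n k N : nat) : R :=
  sum_up (fun p => (-1) ^ p * Rbinom n p * Rbinom k (N - p)) (S N).

Lemma fa_0 n k : fa n k 0 = 1.
Proof. unfold fa. simpl. rewrite !Rbinom_0. lra. Qed.

Lemma fa_rec1 n k N : fa (S n) k (S N) = fa n k (S N) - fa n k N.
Proof.
  unfold fa. rewrite (sum_up_S_l _ (S N)). rewrite (sum_up_S_l (fun p => (-1) ^ p * Rbinom n p * Rbinom k (S N - p)) (S N)).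
  rewrite !Rbinom_0.
  rewrite (sum_up_ext (fun j => (-1) ^ S j * Rbinom (S n) (S j) * Rbinom k (S N - S j))
     (fun j => (-1) ^ S j * Rbinom n (S j) * Rbinom k (S N - S j) - (-1) ^ j * Rbinom n j * Rbinom k (N - j))).
  2:{ intros j _. rewrite Rbinom_S. replace (S N - S j)%nat with (N - j)%nat by lia. simpl. ring. }
  unfold Rminus. rewrite sum_up_plus. 
  rewrite (sum_up_ext (fun j => - ((-1) ^ j * Rbinom n j * Rbinom k (N - j))) (fun j => (-1) * ((-1) ^ j * Rbinom n j * Rbinom k (N - j)))) by (intros; ring).
  rewrite sum_up_scal. ring.
Qed.

Lemma fa_rec2 n k N : fa n (S k) (S N) = fa n k (S N) + fa n k N.
Proof.
  unfold fa. change (sum_up (fun p => (-1) ^ p * Rbinom n p * Rbinom (S k) (S N - p)) (S (S N))) with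
   (sum_up (fun p => (-1) ^ p * Rbinom n p * Rbinom (S k) (S N - p)) (S N) + (-1) ^ (S N) * Rbinom n (S N) * Rbinom (S k) (S N - S N)).
  change (sum_up (fun p => (-1) ^ p * Rbinom n p * Rbinom k (S N - p)) (S (S N))) with
   (sum_up (fun p => (-1) ^ p * Rbinom n p * Rbinom k (S N - p)) (S N) + (-1) ^ (S N) * Rbinom n (S N) * Rbinom k (S N - S N)).
  rewrite Nat.sub_diag, !Rbinom_0.
  rewrite (sum_up_ext (fun p => (-1) ^ p * Rbinom n p * Rbinom (S k) (S N - p))
    (fun p => (-1) ^ p * Rbinom n p * Rbinom k (S N - p) + (-1) ^ p * Rbinom n p * Rbinom k (N - p))).
  2:{ intros p Hp. replace (S N - p)%nat with (S (N - p)) by lia. rewrite Rbinom_S. ring. }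
  rewrite sum_up_plus. ring.
Qed.

Definition gform (n N : nat) : R :=
  if Nat.even N then (-1) ^ (Nat.div2 N) * Rbinom n (Nat.div2 N) else 0.

Lemma fa_00 N : fa 0 0 N = if Nat.eqb N 0 then 1 else 0.
Proof.
  destruct N. apply fa_0. simpl Nat.eqb. unfold fa.
  rewrite (sum_up_ext _ (fun _ => 0)). apply sum_up_zero.
  intros p Hp. destruct p. rewrite Nat.sub_0_r, (Rbinom_gt 0 (S N)) by lia. ring.
  rewrite (Rbinom_gt 0 (S p)) by lia. ring.
Qed.

Lemma g_closed n N : fa n n N = gform n N.
Proof.
  revert N; induction n; intros N.
  - rewrite fa_00. unfold gform. destruct N. simpl. rewrite Rbinom_0. lra.
    simpl Nat.eqb. destruct (Nat.even (S N)) eqn:E; auto.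
    destruct N. discriminate. simpl Nat.div2. rewrite (Rbinom_gt 0 (S (Nat.div2 N))) by apply Nat.lt_0_succ. ring.
  - destruct N as [|[|N]].
    + rewrite fa_0. unfold gform. simpl. rewrite Rbinom_0. ring.
    + rewrite fa_rec2, fa_rec1, !fa_0, IHn.
      unfold gform. simpl. lra.
    + rewrite fa_rec2, fa_rec1, fa_rec1, !IHn.
      unfold gform. simpl Nat.even. simpl Nat.div2.
      destruct (Nat.even N); [|ring]. rewrite Rbinom_S. simpl. ring.
Qed.

Lemma even_2m m : Nat.even (2 * m) = true.
Proof. apply Nat.even_spec. exists m; auto. Qed.
Lemma div2_2m m : Nat.div2 (2 * m) = m.
Proof. apply Nat.div2_double. Qed.
Lemma even_2m1 m : Nat.even (2 * m + 1) = false.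
Proof. rewrite Nat.even_add, even_2m. reflexivity. Qed.

Lemma alt0 n m : fa n n (2 * m + 1) = 0.
Proof. rewrite g_closed. unfold gform. rewrite even_2m1. auto. Qed.

Lemma g_even n m : fa n n (2 * m) = (-1) ^ m * Rbinom n m.
Proof. rewrite g_closed. unfold gform. rewrite even_2m, div2_2m. auto. Qed.

Definition Cm1 (k m : nat) : R := match m with 0%nat => 0 | S m' => Rbinom k m' end.

Lemma alt2 k m : fa (S (S k)) k (2 * m) = (-1) ^ m * (Rbinom k m - Cm1 k m).
Proof.
  destruct m. simpl. rewrite fa_0, Rbinom_0. ring.
  replace (2 * S m)%nat with (S (S (2 * m))) by lia.
  rewrite fa_rec1, !fa_rec1. replace (S (S (2*m))) with (2 * S m)%nat by lia.
  replace (S (2*m)) with (2*m+1)%nat by lia.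
  rewrite !g_even, alt0. simpl. ring.
Qed.

Lemma alt3 k m : fa k (S k) (2 * m) = (-1) ^ m * Rbinom k m.
Proof.
  destruct m. simpl. rewrite fa_0, Rbinom_0. ring.
  replace (2 * S m)%nat with (S (2 * m + 1)) by lia.
  rewrite fa_rec2. replace (S (2*m+1)) with (2 * S m)%nat by lia.
  rewrite g_even, alt0. ring.
Qed.

Lemma alt1 n m : (1 <= n)%nat ->
  sum_up (fun j => (-1) ^ j * INR j * Rbinom n j * Rbinom n (2 * m + 1 - j)) (S (2 * m + 1))
  = - INR n * (-1) ^ m * Rbinom (n - 1) m.
Proof.
  intros Hn. destruct n as [|n']; [lia|]. replace (S n' - 1)%nat with n' by lia.
  rewrite sum_up_S_l. simpl INR at 1. rewrite Rmult_0_r, !Rmult_0_l, Rplus_0_l.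
  rewrite (sum_up_ext _ (fun p => (- INR (S n')) * ((-1) ^ p * Rbinom n' p * Rbinom (S n') (2 * m - p)))).
  2:{ intros p Hp. rewrite Rmult_assoc. rewrite (Rmult_assoc ((-1) ^ S p)). rewrite <- (Rmult_assoc (INR (S p))).
      rewrite Rbinom_absorb. replace (2 * m + 1 - S p)%nat with (2 * m - p)%nat by lia. simpl. ring. }
  rewrite sum_up_scal. replace (2 * m + 1)%nat with (S (2 * m)) by lia.
  fold (fa n' (S n') (2 * m)). rewrite alt3. ring.
Qed.

Definition ev (T : Gterm) (a b : R) (u : nat -> R) : R :=
  let '(c, p, q, i, j) := T in c * a ^ p * b ^ q * u i * u j.

Definition GvA (G : list Gterm) a b u : R := fold_right (fun T acc => ev T a b u + acc) 0 G.

Definition dq (p q : nat) : nat := match p with 0%nat => q | S _ => S q end.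

Definition dT (T : Gterm) : list Gterm :=
  let '(c, p, q, i, j) := T in
  [(c * INR p, pred p, dq p q, i, j); (c, p, q, S i, j); (c, p, q, i, S j)].

Definition dG (G : list Gterm) : list Gterm := flat_map dT G.

Definition Ritem : Type := (R * nat * nat * nat)%type.
Definition itv (it : Ritem) a b (u : nat -> R) : R :=
  let '(c, p, q, m) := it in c * a ^ p * b ^ q * u m * u m.
Definition restv (L : list Ritem) a b u : R := fold_right (fun it acc => itv it a b u + acc) 0 L.
Definition wt (it : Ritem) : nat := let '(_, p, q, _) := it in (p + q)%nat.
Definition mi (it : Ritem) : nat := let '(_, _, _, m) := it in m.

Definition scG (r : R) (G : list Gterm) : list Gterm :=
  map (fun T => let '(c, p, q, i, j) := T in (r * c, p, q, i, j)) G.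
Definition scR (r : R) (L : list Ritem) : list Ritem :=
  map (fun it => let '(c, p, q, m) := it in (r * c, p, q, m)) L.

Lemma GvA_app G1 G2 a b u : GvA (G1 ++ G2) a b u = GvA G1 a b u + GvA G2 a b u.
Proof. induction G1; simpl. lra. rewrite IHG1. lra. Qed.
Lemma dG_app G1 G2 : dG (G1 ++ G2) = dG G1 ++ dG G2.
Proof. unfold dG. apply flat_map_app. Qed.
Lemma dG_cons T G : dG (T :: G) = dT T ++ dG G.
Proof. reflexivity. Qed.
Lemma GvA_dG_sc r G a b u : GvA (dG (scG r G)) a b u = r * GvA (dG G) a b u.
Proof. induction G as [|[[[[c p] q] i] j] G IH]; simpl. lra.
  rewrite IH. ring. Qed.
Lemma restv_app L1 L2 a b u : restv (L1 ++ L2) a b u = restv L1 a b u + restv L2 a b u.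
Proof. induction L1; simpl. lra. rewrite IHL1. lra. Qed.
Lemma restv_sc r L a b u : restv (scR r L) a b u = r * restv L a b u.
Proof. induction L as [|[[[c p] q] m] L IH]; simpl. lra. rewrite IH. ring. Qed.
Lemma Forall_scR (P : Ritem -> Prop) r L :
  (forall c p q m, P (c, p, q, m) -> P (r * c, p, q, m)) -> List.Forall P L -> List.Forall P (scR r L).
Proof. intros H HL. induction HL as [|[[[c p] q] m] L Hx HL IH]; simpl; constructor; auto. Qed.

Definition mainit (c : R) (p q i j : nat) : Ritem :=
  let m := Nat.div2 (i + j) in
  if Nat.even (i + j) then ((-1) ^ (i + m) * c, p, q, m)
  else (- (-1) ^ (i + m) * (INR j - INR i) / 2 * (c * INR p), pred p, dq p q, m).

Lemma pow_m1_double i : (-1) ^ (i + i) = 1.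
Proof. rewrite pow_add. rewrite <- Rpow_mult_distr. replace (-1 * -1) with 1 by ring. apply pow1. Qed.

Lemma mainit_even c p q i s : mainit c p q i (i + 2 * s) = ((-1) ^ s * c, p, q, (i + s)%nat).
Proof.
  unfold mainit. replace (i + (i + 2 * s))%nat with (2 * (i + s))%nat by lia.
  rewrite even_2m, div2_2m.
  replace (i + (i + s))%nat with ((i + i) + s)%nat by lia. rewrite pow_add, pow_m1_double, Rmult_1_l. reflexivity.
Qed.

Lemma mainit_odd c p q i s : mainit c p q i (i + (2 * s + 1)) =
  (- (-1) ^ s * INR (2 * s + 1) / 2 * (c * INR p), pred p, dq p q, (i + s)%nat).
Proof.
  unfold mainit. replace (i + (i + (2 * s + 1)))%nat with (2 * (i + s) + 1)%nat by lia.
  rewrite even_2m1.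
  replace (Nat.div2 (2 * (i + s) + 1)) with (i + s)%nat.
  2:{ replace (2 * (i + s) + 1)%nat with (S (2 * (i+s))) by lia. rewrite Nat.div2_succ_double. auto. }
  replace (i + (i + s))%nat with ((i + i) + s)%nat by lia. rewrite pow_add, pow_m1_double, Rmult_1_l.
  rewrite (plus_INR i). replace (INR i + INR (2 * s + 1) - INR i) with (INR (2 * s + 1)) by ring. reflexivity.
Qed.

Lemma dq_wt p q : (pred p + dq p q <= p + q)%nat.
Proof. destruct p; simpl; lia. Qed.

Definition RedP (p q i j : nat) (it : Ritem) : Prop :=
  (wt it <= p + q)%nat /\ (2 * mi it + 2 <= i + j)%nat.

Lemma red_ord_aux : forall D d c p q i, (d <= D)%nat -> exists G rest,
  (forall a b u, ev (c, p, q, i, (i + d)%nat) a b u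
     = GvA (dG G) a b u + itv (mainit c p q i (i + d)) a b u + restv rest a b u)
  /\ List.Forall (RedP p q i (i + d)) rest.
Proof.
  induction D; intros d c p q i Hd.
  - replace d with 0%nat by lia. exists [], []. split; [|constructor].
    intros a b u. replace (i + 0)%nat with (i + 2 * 0)%nat by lia. rewrite mainit_even.
    simpl. replace (i+0)%nat with i by lia. ring.
  - destruct d as [|[|d']].
    + apply IHD; lia.
    + exists [(c / 2, p, q, i, i)], []. split; [|constructor].
      intros a b u. replace (i + 1)%nat with (i + (2 * 0 + 1))%nat by lia. rewrite mainit_odd.
      replace (i + (2 * 0 + 1))%nat with (S i) by lia. replace (i + 0)%nat with i by lia.
      simpl. field.
    + destruct (IHD (S d') (c * INR p) (pred p) (dq p q) i) as [G1 [rest1 [H1 F1]]]; [lia|].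
      destruct (IHD d' c p q (S i)) as [G2 [rest2 [H2 F2]]]; [lia|].
      assert (Hev : forall a b u, ev (c, p, q, i, (i + S (S d'))%nat) a b u =
          GvA (dG [(c, p, q, i, (i + S d')%nat)]) a b u
          - ev (c * INR p, pred p, dq p q, i, (i + S d')%nat) a b u
          - ev (c, p, q, S i, (S i + d')%nat) a b u).
      { intros a b u. simpl. replace (S (i + S d')) with (i + S (S d'))%nat by lia.
        replace (S (i + d'))%nat with (i + S d')%nat by lia. ring. }
      destruct (Nat.Even_or_Odd d') as [[s Hs]|[s Hs]]; subst d'.
      * exists ((c, p, q, i, (i + S (2 * s))%nat) :: scG (-1) G1 ++ scG (-1) G2).
        exists (scR (-1) (mainit (c * INR p) (pred p) (dq p q) i (i + S (2 * s)) :: rest1) ++ scR (-1) rest2).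
        split.
        { intros a b u. rewrite Hev, H1, H2.
          rewrite (dG_cons _ (scG (-1) G1 ++ scG (-1) G2)), dG_app, !GvA_app, !GvA_dG_sc, restv_app, !restv_sc.
          replace (i + S (S (2 * s)))%nat with (i + 2 * S s)%nat by lia.
          replace (S i + 2 * s)%nat with (S i + 2 * s)%nat by lia.
          rewrite mainit_even, mainit_even. simpl restv.
          replace (S i + s)%nat with (i + S s)%nat by lia.
          simpl GvA. simpl. ring. }
        { apply List.Forall_app; split; apply Forall_scR.
          - intros c0 p0 q0 m0 HH; exact HH.
          - constructor.
            + replace (i + S (2 * s))%nat with (i + (2 * s + 1))%nat by lia. rewrite mainit_odd.
              unfold RedP; simpl. pose proof (dq_wt p q). pose proof (dq_wt (pred p) (dq p q)). lia.
            + eapply List.Forall_impl; [|exact F1]. intros [[[c0 p0] q0] m0] [HA HB]. unfold RedP; simpl in *.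
              pose proof (dq_wt p q). lia.
          - intros c0 p0 q0 m0 HH; exact HH.
          - eapply List.Forall_impl; [|exact F2]. intros [[[c0 p0] q0] m0] [HA HB]. unfold RedP; simpl in *. lia. }
      * exists ((c, p, q, i, (i + S (2 * s + 1))%nat) :: scG (-1) G1 ++ scG (-1) G2).
        exists (scR (-1) rest1 ++ scR (-1) rest2).
        split.
        { intros a b u. rewrite Hev, H1, H2.
          rewrite (dG_cons _ (scG (-1) G1 ++ scG (-1) G2)), dG_app, !GvA_app, !GvA_dG_sc, restv_app, !restv_sc.
          replace (i + S (S (2 * s + 1)))%nat with (i + (2 * S s + 1))%nat by lia.
          replace (i + S (2 * s + 1))%nat with (i + 2 * S s)%nat by lia.
          rewrite mainit_odd, mainit_even, mainit_odd. 
          replace (S i + s)%nat with (i + S s)%nat by lia.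
          simpl GvA. unfold itv. rewrite !plus_INR, !mult_INR. rewrite (S_INR s). simpl. field. }
        { apply List.Forall_app; split; apply Forall_scR.
          - intros c0 p0 q0 m0 HH; exact HH.
          - eapply List.Forall_impl; [|exact F1]. intros [[[c0 p0] q0] m0] [HA HB]. unfold RedP; simpl in *.
            pose proof (dq_wt p q). lia.
          - intros c0 p0 q0 m0 HH; exact HH.
          - eapply List.Forall_impl; [|exact F2]. intros [[[c0 p0] q0] m0] [HA HB]. unfold RedP; simpl in *. lia. }
Qed.

Lemma pow_m1_even k : Nat.even k = true -> (-1) ^ k = 1.
Proof. intros H. apply Nat.even_spec in H. destruct H as [t ->]. rewrite pow_mult.
  replace ((-1) ^ 2) with 1 by (simpl; ring). apply pow1. Qed.
Lemma pow_m1_odd k : Nat.even k = false -> (-1) ^ k = -1.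
Proof. intros H. destruct (Nat.Even_or_Odd k) as [[t ->]|[t ->]].
  rewrite even_2m in H; discriminate. rewrite pow_add, pow_mult.
  replace ((-1) ^ 2) with 1 by (simpl; ring). rewrite pow1. ring. Qed.
Lemma pow_m1_sq k : (-1) ^ k * (-1) ^ k = 1.
Proof. rewrite <- pow_add. apply pow_m1_even. rewrite Nat.even_add. destruct (Nat.even k); auto. Qed.

Lemma pow_m1_val k : (-1) ^ k = if Nat.even k then 1 else -1.
Proof. destruct (Nat.even k) eqn:E. apply pow_m1_even; auto. apply pow_m1_odd; auto. Qed.
Lemma pow_m1_same i j : Nat.even (i + j) = true -> (-1) ^ i = (-1) ^ j.
Proof. rewrite Nat.even_add, !pow_m1_val. destruct (Nat.even i), (Nat.even j); simpl; intros H; try discriminate; auto. Qed.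
Lemma pow_m1_diff i j : Nat.even (i + j) = false -> (-1) ^ i = - (-1) ^ j.
Proof. rewrite Nat.even_add, !pow_m1_val. destruct (Nat.even i), (Nat.even j); simpl; intros H; try discriminate; ring. Qed.

Lemma itv_mainit_sym c p q i j a b u :
  itv (mainit c p q i j) a b u = itv (mainit c p q j i) a b u.
Proof.
  unfold mainit. rewrite (Nat.add_comm j i). destruct (Nat.even (i + j)) eqn:E; simpl.
  - rewrite !pow_add. rewrite (pow_m1_same i j E). ring.
  - rewrite !pow_add. rewrite (pow_m1_diff i j E). field.
Qed.

Lemma red2 c p q i j : exists G rest,
  (forall a b u, ev (c, p, q, i, j) a b u
     = GvA (dG G) a b u + itv (mainit c p q i j) a b u + restv rest a b u)
  /\ List.Forall (RedP p q i j) rest.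
Proof.
  destruct (Nat.le_gt_cases i j).
  - replace j with (i + (j - i))%nat by lia. eapply red_ord_aux. eauto.
  - destruct (red_ord_aux (i - j) (i - j) c p q j (le_n _)) as [G [rest [H1 H2]]].
    replace (j + (i - j))%nat with i in * by lia.
    exists G, rest. split.
    + intros a b u. rewrite itv_mainit_sym. rewrite <- H1. simpl. ring.
    + eapply List.Forall_impl; [|exact H2]. intros it [HA HB]. split; lia.
Qed.

Definition Dec (P : Ritem -> Prop) (f h : R -> R -> (nat -> R) -> R) : Prop :=
  exists G rest, (forall a b u, f a b u = GvA (dG G) a b u + h a b u + restv rest a b u)
   /\ List.Forall P rest.

Lemma Dec_zero P : Dec P (fun _ _ _ => 0) (fun _ _ _ => 0).
Proof. exists [], []. split; [intros; simpl; ring|constructor]. Qed.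

Lemma Dec_add P f1 h1 f2 h2 : Dec P f1 h1 -> Dec P f2 h2 ->
  Dec P (fun a b u => f1 a b u + f2 a b u) (fun a b u => h1 a b u + h2 a b u).
Proof.
  intros [G1 [r1 [H1 F1]]] [G2 [r2 [H2 F2]]]. exists (G1 ++ G2), (r1 ++ r2). split.
  - intros. rewrite dG_app, GvA_app, restv_app, H1, H2. ring.
  - apply List.Forall_app; auto.
Qed.

Lemma Dec_sum P (f h : nat -> R -> R -> (nat -> R) -> R) N :
  (forall j, (j < N)%nat -> Dec P (f j) (h j)) ->
  Dec P (fun a b u => sum_up (fun j => f j a b u) N) (fun a b u => sum_up (fun j => h j a b u) N).
Proof.
  induction N; intros H. apply Dec_zero.
  simpl. apply Dec_add. apply IHN; intros; apply H; lia. apply H; lia.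
Qed.

Lemma Dec_if P (bb : bool) f h : (bb = true -> Dec P f h) ->
  Dec P (fun a b u => if bb then f a b u else 0) (fun a b u => if bb then h a b u else 0).
Proof. destruct bb; intros H. destruct (H eq_refl) as [G [r [H1 F1]]]. exists G, r; auto. apply Dec_zero. Qed.

Lemma Dec_term P c p q i j : (forall it, RedP p q i j it -> P it) ->
  Dec P (ev (c, p, q, i, j)) (itv (mainit c p q i j)).
Proof.
  intros HP. destruct (red2 c p q i j) as [G [r [H1 F1]]]. exists G, r. split; auto.
  eapply List.Forall_impl; [|exact F1]. auto.
Qed.

Lemma Dec_term_rest P c p q i j : (forall it, RedP p q i j it -> P it) -> P (mainit c p q i j) ->
  Dec P (ev (c, p, q, i, j)) (fun _ _ _ => 0).
Proof.
  intros HP HM. destruct (red2 c p q i j) as [G [r [H1 F1]]]. exists G, (mainit c p q i j :: r). split.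
  intros. rewrite H1. simpl. ring.
  constructor; auto. eapply List.Forall_impl; [|exact F1]. auto.
Qed.

Lemma Dec_ext P f h f' h' : (forall a b u, f a b u = f' a b u) -> (forall a b u, h a b u = h' a b u) ->
  Dec P f h -> Dec P f' h'.
Proof. intros E1 E2 [G [r [H1 F1]]]. exists G, r. split; auto. intros. rewrite <- E1, <- E2. auto. Qed.

Lemma mainit_wt c p q i j : (wt (mainit c p q i j) <= p + q)%nat /\ mi (mainit c p q i j) = Nat.div2 (i + j).
Proof. unfold mainit. destruct (Nat.even (i + j)); simpl. lia. pose proof (dq_wt p q). lia. Qed.

Lemma div2_odd_eq N : Nat.even N = false -> (2 * Nat.div2 N + 1 = N)%nat.
Proof. intros H. pose proof (Nat.div2_odd N). rewrite <- Nat.negb_even, H in H0. simpl in H0.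
  generalize dependent (Nat.div2 N). intros. lia. Qed.

Definition I1A (n : nat) (a b : R) (u : nat -> R) : R :=
  sum_up (fun j => if Nat.odd j then
            Rbinom n j * (-1) ^ (n - j) * a ^ (n - j) * u j else 0) (S n)
  - Rbinom n 2 * b *
    sum_up (fun k => if Nat.even k then
            Rbinom (n - 2) k * (-1) ^ (n - 2 - k) * a ^ (n - 2 - k) * u k
            else 0) (S (n - 2)).

Definition I2A (n : nat) (a b : R) (u : nat -> R) : R :=
  sum_up (fun k => if Nat.even k then
            Rbinom n k * (-1) ^ (n - k) * a ^ (n - k) * u k else 0) (S n)
  - Rbinom n 2 * b *
    sum_up (fun j => if Nat.odd j then
            Rbinom (n - 2) j * (-1) ^ (n - 2 - j) * a ^ (n - 2 - j) * u j
            else 0) (S (n - 2)).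

Definition Ca (n j : nat) : R := Rbinom n j * (-1) ^ (n - j).

Definition tAA n j k : Gterm := (Ca n j * Ca n k, ((n - j) + (n - k))%nat, 0%nat, j, k).
Definition tAB n j k : Gterm := (- Rbinom n 2 * Ca n j * Ca (n - 2) k, ((n - j) + (n - 2 - k))%nat, 1%nat, j, k).
Definition tBA n j k : Gterm := (- Rbinom n 2 * Ca (n - 2) j * Ca n k, ((n - 2 - j) + (n - k))%nat, 1%nat, j, k).
Definition tBB n j k : Gterm := (Rbinom n 2 * Rbinom n 2 * Ca (n - 2) j * Ca (n - 2) k, ((n - 2 - j) + (n - 2 - k))%nat, 2%nat, j, k).

Definition dsum (N1 N2 : nat) (F : nat -> nat -> R) : R :=
  sum_up (fun j => sum_up (fun k => F j k) N2) N1.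

Lemma prod_dsum (f g : nat -> R) N1 N2 :
  sum_up f N1 * sum_up g N2 = dsum N1 N2 (fun j k => f j * g k).
Proof. apply sum_up_mult. Qed.

Lemma dsum_ext N1 N2 F G : (forall j k, (j < N1)%nat -> (k < N2)%nat -> F j k = G j k) -> dsum N1 N2 F = dsum N1 N2 G.
Proof. intros H. apply sum_up_ext; intros j Hj; apply sum_up_ext; intros k Hk; auto. Qed.

Lemma dsum_scal c N1 N2 F : c * dsum N1 N2 F = dsum N1 N2 (fun j k => c * F j k).
Proof. unfold dsum. rewrite <- sum_up_scal. apply sum_up_ext; intros. rewrite <- sum_up_scal. auto. Qed.

Lemma expand (n : nat) a b u : (2 <= n)%nat ->
  I1A n a b u * I2A n a b u =
    dsum (S n) (S n) (fun j k => if Nat.odd j && Nat.even k then ev (tAA n j k) a b u else 0)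
  + dsum (S n) (S (n - 2)) (fun j k => if Nat.odd j && Nat.odd k then ev (tAB n j k) a b u else 0)
  + dsum (S (n - 2)) (S n) (fun j k => if Nat.even j && Nat.even k then ev (tBA n j k) a b u else 0)
  + dsum (S (n - 2)) (S (n - 2)) (fun j k => if Nat.even j && Nat.odd k then ev (tBB n j k) a b u else 0).
Proof.
  intros Hn. unfold I1A, I2A.
  set (S1 := sum_up _ (S n)). set (S1' := sum_up _ (S (n - 2))).
  set (S2 := sum_up (fun k => if Nat.even k then _ else 0) (S n)).
  set (S2' := sum_up (fun j => if Nat.odd j then _ else 0) (S (n - 2))).
  replace ((S1 - Rbinom n 2 * b * S1') * (S2 - Rbinom n 2 * b * S2')) with
    (S1 * S2 + (- Rbinom n 2 * b) * (S1 * S2') + (- Rbinom n 2 * b) * (S1' * S2) + (Rbinom n 2 * b * Rbinom n 2 * b) * (S1' * S2')) by ring.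
  unfold S1, S1', S2, S2'. rewrite !prod_dsum, !dsum_scal.
  f_equal; [f_equal; [f_equal|]|]; apply dsum_ext; intros j k Hj Hk;
  destruct (Nat.odd j), (Nat.even j), (Nat.odd k), (Nat.even k); simpl; unfold Ca; rewrite ?pow_add; ring.
Qed.

Definition Pn (n : nat) (it : Ritem) : Prop := (wt it + 2 * mi it + 3 <= 2 * n)%nat /\ (mi it < n)%nat.

Lemma odd_ex j : Nat.odd j = true -> exists t, j = (2 * t + 1)%nat.
Proof. intros H. apply Nat.odd_spec in H. destruct H as [t Ht]. exists t; lia. Qed.
Lemma even_ex j : Nat.even j = true -> exists t, j = (2 * t)%nat.
Proof. intros H. apply Nat.even_spec in H. destruct H as [t Ht]. exists t; lia. Qed.

Definition hAA n a b u := dsum (S n) (S n) (fun j k => if Nat.odd j && Nat.even k then itv (mainit (Ca n j * Ca n k) ((n - j) + (n - k)) 0 j k) a b u else 0).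
Definition hAB n a b u := dsum (S n) (S (n - 2)) (fun j k => if Nat.odd j && Nat.odd k then itv (mainit (- Rbinom n 2 * Ca n j * Ca (n - 2) k) ((n - j) + (n - 2 - k)) 1 j k) a b u else 0).
Definition hBA n a b u := dsum (S (n - 2)) (S n) (fun j k => if Nat.even j && Nat.even k then itv (mainit (- Rbinom n 2 * Ca (n - 2) j * Ca n k) ((n - 2 - j) + (n - k)) 1 j k) a b u else 0).

Lemma Dec_dsum P N1 N2 (F H : nat -> nat -> R -> R -> (nat -> R) -> R) :
  (forall j k, (j < N1)%nat -> (k < N2)%nat -> Dec P (F j k) (H j k)) ->
  Dec P (fun a b u => dsum N1 N2 (fun j k => F j k a b u)) (fun a b u => dsum N1 N2 (fun j k => H j k a b u)).
Proof. intros HH. unfold dsum. apply (Dec_sum P (fun j a b u => sum_up (fun k => F j k a b u) N2)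
   (fun j a b u => sum_up (fun k => H j k a b u) N2)).
  intros j Hj. apply Dec_sum. intros k Hk. auto. Qed.

Lemma decomp_all n : (2 <= n)%nat ->
  Dec (Pn n) (fun a b u => I1A n a b u * I2A n a b u)
             (fun a b u => hAA n a b u + hAB n a b u + hBA n a b u).
Proof.
  intros Hn. eapply Dec_ext. intros a b u. symmetry. apply expand; auto. intros a b u. rewrite <- (Rplus_0_r (hAA n a b u + hAB n a b u + hBA n a b u)). reflexivity.
  apply Dec_add; [apply Dec_add; [apply Dec_add|]|].
  - apply Dec_dsum. intros j k Hj Hk. apply Dec_if. intros Hb. apply Bool.andb_true_iff in Hb as [Hj' Hk'].
    apply Dec_term. intros it [HA HB]. destruct (odd_ex j Hj') as [t1 ->]. destruct (even_ex k Hk') as [t2 ->].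
    unfold Pn. lia.
  - apply Dec_dsum. intros j k Hj Hk. apply Dec_if. intros Hb. apply Bool.andb_true_iff in Hb as [Hj' Hk'].
    apply Dec_term. intros it [HA HB]. destruct (odd_ex j Hj') as [t1 ->]. destruct (odd_ex k Hk') as [t2 ->].
    unfold Pn. lia.
  - apply Dec_dsum. intros j k Hj Hk. apply Dec_if. intros Hb. apply Bool.andb_true_iff in Hb as [Hj' Hk'].
    apply Dec_term. intros it [HA HB]. destruct (even_ex j Hj') as [t1 ->]. destruct (even_ex k Hk') as [t2 ->].
    unfold Pn. lia.
  - eapply Dec_ext; [intros; reflexivity| |].
    2:{ apply Dec_dsum. intros j k Hj Hk. apply Dec_if. intros Hb. apply Bool.andb_true_iff in Hb as [Hj' Hk'].
    apply Dec_term_rest. intros it [HA HB]. destruct (even_ex j Hj') as [t1 ->]. destruct (odd_ex k Hk') as [t2 ->].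
    unfold Pn. lia.
    destruct (mainit_wt (Rbinom n 2 * Rbinom n 2 * Ca (n - 2) j * Ca (n - 2) k) ((n - 2 - j) + (n - 2 - k)) 2 j k) as [W M].
    unfold Pn. rewrite M. destruct (even_ex j Hj') as [t1 ->]. destruct (odd_ex k Hk') as [t2 ->].
    replace (2 * t1 + (2 * t2 + 1))%nat with (2 * (t1 + t2) + 1)%nat in * by lia.
    pose proof (div2_odd_eq (2 * (t1 + t2) + 1) (even_2m1 _)) as Hd.
    generalize dependent (Nat.div2 (2 * (t1 + t2) + 1)). intros. lia. }
    intros a b u. simpl. unfold dsum. rewrite (sum_up_ext _ (fun _ => 0)). apply sum_up_zero.
    intros. rewrite (sum_up_ext _ (fun _ => 0)). apply sum_up_zero. intros. destruct (_ && _); auto.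
Qed.

Definition cv (it : Ritem) (a b : R) : R := let '(c, p, q, _) := it in c * a ^ p * b ^ q.

Lemma itv_cv it a b u : itv it a b u = cv it a b * (u (mi it) * u (mi it)).
Proof. destruct it as [[[c p] q] m]. simpl. ring. Qed.

Lemma regroup (phi : nat -> nat -> R) (g : nat -> R) N1 N2 :
  dsum N1 N2 (fun j k => phi j k * g (Nat.div2 (j + k))) =
  sum_up (fun N => g (Nat.div2 N) *
     sum_up (fun j => if Nat.ltb j N1 && Nat.ltb (N - j) N2 then phi j (N - j)%nat else 0) (S N)) (N1 + N2).
Proof.
  unfold dsum. rewrite sum_up_antidiag. apply sum_up_ext. intros N HN.
  rewrite <- sum_up_scal. apply sum_up_ext. intros j Hj.
  destruct (Nat.ltb j N1 && Nat.ltb (N - j) N2); [|ring].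
  replace (j + (N - j))%nat with N by lia. ring.
Qed.

Lemma pairs_trunc (G : nat -> R) n M :
  (2 * n <= M)%nat -> (forall N, (2 * n <= N)%nat -> G N = 0) ->
  sum_up G M = sum_up (fun m => G (2 * m)%nat + G (2 * m + 1)%nat) n.
Proof. intros HM HG. rewrite (sum_up_trunc G (2 * n) M HG HM). apply sum_up_pairs. Qed.

Lemma div2_2m1 m : Nat.div2 (2 * m + 1) = m.
Proof. replace (2 * m + 1)%nat with (S (2 * m)) by lia. apply Nat.div2_succ_double. Qed.

Lemma mainit_at_odd c p q j k m : (j + k = 2 * m + 1)%nat ->
  mainit c p q j k = (- (-1) ^ (j + m) * (INR k - INR j) / 2 * (c * INR p), pred p, dq p q, m).
Proof. intros H. unfold mainit. rewrite H, even_2m1, div2_2m1. auto. Qed.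
Lemma mainit_at_even c p q j k m : (j + k = 2 * m)%nat ->
  mainit c p q j k = ((-1) ^ (j + m) * c, p, q, m).
Proof. intros H. unfold mainit. rewrite H, even_2m, div2_2m. auto. Qed.

Lemma even_sub N j : (j <= N)%nat -> Nat.even (N - j) = Bool.eqb (Nat.even N) (Nat.even j).
Proof. intros H. replace N with ((N - j) + j)%nat at 2 by lia. rewrite Nat.even_add.
  destruct (Nat.even (N - j)), (Nat.even j); auto. Qed.

Lemma ltb_false_binom n j b : Nat.ltb j (S n) = false -> Rbinom n j * b = 0.
Proof. intros H. apply Nat.ltb_ge in H. rewrite Rbinom_gt by lia. ring. Qed.

Lemma Ca_prod n n' j k : (j <= n)%nat -> (k <= n')%nat ->
  Ca n j * Ca n' k = (-1) ^ ((n - j) + (n' - k)) * (Rbinom n j * Rbinom n' k).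
Proof. intros. unfold Ca. rewrite pow_add. ring. Qed.

Lemma INR_sub a b : (b <= a)%nat -> INR (a - b) = INR a - INR b.
Proof. intros. apply minus_INR. auto. Qed.

Definition phiAA n a b j k := if Nat.odd j && Nat.even k then cv (mainit (Ca n j * Ca n k) ((n - j) + (n - k)) 0 j k) a b else 0.
Definition PsiAA n a b N := sum_up (fun j => if Nat.ltb j (S n) && Nat.ltb (N - j) (S n) then phiAA n a b j (N - j)%nat else 0) (S N).

Lemma odd_negb j : Nat.odd j = negb (Nat.even j).
Proof. rewrite <- Nat.negb_even. auto. Qed.

Lemma PsiAA_even n a b m : PsiAA n a b (2 * m) = 0.
Proof.
  unfold PsiAA. rewrite (sum_up_ext _ (fun _ => 0)). apply sum_up_zero.
  intros j Hj. unfold phiAA. rewrite even_sub by lia. rewrite even_2m, odd_negb.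
  destruct (Nat.even j); simpl; destruct (_ && _); auto.
Qed.

Lemma PsiAA_odd n a b m : (m < n)%nat -> (1 <= n)%nat ->
  PsiAA n a b (2 * m + 1) = INR (2 * n - 2 * m - 1) / 2 * INR n * Rbinom (n - 1) m * a ^ (2 * n - 2 * m - 2) * b.
Proof.
  intros Hm Hn. set (N := (2 * m + 1)%nat).
  set (K := INR (2 * n - 2 * m - 1) * a ^ (2 * n - 2 * m - 2) * b * (-1) ^ m / 2).
  set (T := fun j => (INR j - INR (N - j)) * (Rbinom n j * Rbinom n (N - j))).
  unfold PsiAA. rewrite (sum_up_ext _ (fun j => K * ((1 - (-1) ^ j) / 2 * T j))).
  2:{ intros j Hj. unfold phiAA, T.
      destruct (Nat.ltb j (S n)) eqn:E1; [|simpl; rewrite (ltb_false_binom n j) by auto; ring].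
      destruct (Nat.ltb (N - j) (S n)) eqn:E2; [|simpl; rewrite (Rmult_comm (Rbinom n j)), (ltb_false_binom n (N - j)) by auto; ring].
      apply Nat.ltb_lt in E1, E2. simpl.
      rewrite odd_negb, even_sub by lia. unfold N at 1. rewrite even_2m1.
      destruct (Nat.even j) eqn:Ej; simpl.
      - rewrite pow_m1_even by auto. field.
      - rewrite pow_m1_odd by auto.
        rewrite (mainit_at_odd _ _ _ j (N - j) m) by lia.
        replace ((n - j) + (n - (N - j)))%nat with (S (2 * n - 2 * m - 2)) by lia.
        cbn [pred dq cv].
        rewrite Ca_prod by lia. replace ((n - j) + (n - (N - j)))%nat with (S (2 * n - 2 * m - 2)) by lia.
        replace (2 * n - 2 * m - 1)%nat with (S (2 * n - 2 * m - 2)) by lia.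
        rewrite pow_add. rewrite (pow_m1_odd j) by auto.
        rewrite (pow_m1_odd (S (2 * n - 2 * m - 2))).
        2:{ replace (S (2 * n - 2 * m - 2)) with (2 * (n - m - 1) + 1)%nat by lia. apply even_2m1. }
        unfold K. replace (2 * n - 2 * m - 1)%nat with (S (2 * n - 2 * m - 2)) by lia. field. }
  rewrite sum_up_scal.
  assert (HT : sum_up T (S N) = 0).
  { assert (H1 : sum_up T (S N) = sum_up (fun j => -1 * T j) (S N)).
    { rewrite sum_up_rev at 1. replace (S N - 1)%nat with N by lia.
      apply sum_up_ext. intros j Hj. unfold T. replace (N - (N - j))%nat with j by lia. ring. }
    rewrite sum_up_scal in H1. lra. }
  assert (HE : sum_up (fun j => (-1) ^ j * T j) (S N) = - 2 * INR n * (-1) ^ m * Rbinom (n - 1) m).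
  { unfold T. rewrite (sum_up_ext _ (fun j => 2 * ((-1) ^ j * INR j * Rbinom n j * Rbinom n (2 * m + 1 - j))
        + (- INR N) * ((-1) ^ j * Rbinom n j * Rbinom n (2 * m + 1 - j)))).
    2:{ intros j Hj. rewrite INR_sub by lia. unfold N. ring. }
    rewrite sum_up_plus, !sum_up_scal. unfold N. rewrite alt1 by lia.
    fold (fa n n (2 * m + 1)). rewrite alt0. ring. }
  rewrite (sum_up_ext _ (fun j => / 2 * T j + (- / 2) * ((-1) ^ j * T j))) by (intros; field).
  rewrite sum_up_plus, !sum_up_scal, HT, HE. unfold K.
  transitivity (INR (2 * n - 2 * m - 1) / 2 * INR n * Rbinom (n - 1) m * a ^ (2 * n - 2 * m - 2) * b * ((-1) ^ m * (-1) ^ m)).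
  field. rewrite pow_m1_sq. ring.
Qed.

Definition phiAB n a b j k := if Nat.odd j && Nat.odd k then cv (mainit (- Rbinom n 2 * Ca n j * Ca (n - 2) k) ((n - j) + (n - 2 - k)) 1 j k) a b else 0.
Definition PsiAB n a b N := sum_up (fun j => if Nat.ltb j (S n) && Nat.ltb (N - j) (S (n - 2)) then phiAB n a b j (N - j)%nat else 0) (S N).
Definition phiBA n a b j k := if Nat.even j && Nat.even k then cv (mainit (- Rbinom n 2 * Ca (n - 2) j * Ca n k) ((n - 2 - j) + (n - k)) 1 j k) a b else 0.
Definition PsiBA n a b N := sum_up (fun j => if Nat.ltb j (S (n - 2)) && Nat.ltb (N - j) (S n) then phiBA n a b j (N - j)%nat else 0) (S N).

Lemma PsiAB_odd n a b m : PsiAB n a b (2 * m + 1) = 0.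
Proof.
  unfold PsiAB. rewrite (sum_up_ext _ (fun _ => 0)). apply sum_up_zero.
  intros j Hj. unfold phiAB. rewrite (odd_negb (2 * m + 1 - j)), even_sub by lia. rewrite even_2m1, odd_negb.
  destruct (Nat.even j); simpl; destruct (_ && _); auto.
Qed.

Lemma PsiBA_odd n a b m : PsiBA n a b (2 * m + 1) = 0.
Proof.
  unfold PsiBA. rewrite (sum_up_ext _ (fun _ => 0)). apply sum_up_zero.
  intros j Hj. unfold phiBA. rewrite even_sub by lia. rewrite even_2m1.
  destruct (Nat.even j); simpl; destruct (_ && _); auto.
Qed.

Lemma PsiAB_even n a b m : (2 <= n)%nat ->
  PsiAB n a b (2 * m) = - Rbinom n 2 * (-1) ^ m * a ^ (2 * n - 2 * m - 2) * b *
     sum_up (fun j => (1 - (-1) ^ j) / 2 * ((-1) ^ j * (Rbinom n j * Rbinom (n - 2) (2 * m - j)))) (S (2 * m)).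
Proof.
  intros Hn. unfold PsiAB. rewrite <- sum_up_scal. apply sum_up_ext. intros j Hj. unfold phiAB.
  destruct (Nat.ltb j (S n)) eqn:E1; [|simpl; rewrite (ltb_false_binom n j) by auto; ring].
  destruct (Nat.ltb (2 * m - j) (S (n - 2))) eqn:E2; [|simpl; rewrite (Rmult_comm (Rbinom n j)), (ltb_false_binom (n - 2) (2 * m - j)) by auto; ring].
  apply Nat.ltb_lt in E1, E2. cbn [andb].
  rewrite ?odd_negb. rewrite even_sub by lia. rewrite even_2m.
  destruct (Nat.even j) eqn:Ej; cbn [andb negb Bool.eqb].
  - rewrite (pow_m1_even j Ej). field.
  - rewrite (pow_m1_odd j Ej).
    rewrite (mainit_at_even _ _ _ j (2 * m - j) m) by lia. cbn [cv].
    replace (- Rbinom n 2 * Ca n j * Ca (n - 2) (2 * m - j)) with (- Rbinom n 2 * (Ca n j * Ca (n - 2) (2 * m - j))) by ring.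
    rewrite Ca_prod by lia.
    replace ((n - j) + (n - 2 - (2 * m - j)))%nat with (2 * n - 2 * m - 2)%nat by lia.
    rewrite (pow_m1_even (2 * n - 2 * m - 2)).
    2:{ replace (2 * n - 2 * m - 2)%nat with (2 * (n - m - 1))%nat by lia. apply even_2m. }
    rewrite pow_add, (pow_m1_odd j Ej). field.
Qed.

Lemma PsiBA_even n a b m : (2 <= n)%nat ->
  PsiBA n a b (2 * m) = - Rbinom n 2 * (-1) ^ m * a ^ (2 * n - 2 * m - 2) * b *
     sum_up (fun j => (1 + (-1) ^ j) / 2 * ((-1) ^ j * (Rbinom (n - 2) j * Rbinom n (2 * m - j)))) (S (2 * m)).
Proof.
  intros Hn. unfold PsiBA. rewrite <- sum_up_scal. apply sum_up_ext. intros j Hj. unfold phiBA.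
  destruct (Nat.ltb j (S (n - 2))) eqn:E1; [|simpl; rewrite (ltb_false_binom (n - 2) j) by auto; ring].
  destruct (Nat.ltb (2 * m - j) (S n)) eqn:E2; [|simpl; rewrite (Rmult_comm (Rbinom (n - 2) j)), (ltb_false_binom n (2 * m - j)) by auto; ring].
  apply Nat.ltb_lt in E1, E2. cbn [andb].
  rewrite even_sub by lia. rewrite even_2m.
  destruct (Nat.even j) eqn:Ej; cbn [andb negb Bool.eqb].
  - rewrite (mainit_at_even _ _ _ j (2 * m - j) m) by lia. cbn [cv].
    replace (- Rbinom n 2 * Ca (n - 2) j * Ca n (2 * m - j)) with (- Rbinom n 2 * (Ca (n - 2) j * Ca n (2 * m - j))) by ring.
    rewrite Ca_prod by lia.
    replace ((n - 2 - j) + (n - (2 * m - j)))%nat with (2 * n - 2 * m - 2)%nat by lia.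
    rewrite (pow_m1_even (2 * n - 2 * m - 2)).
    2:{ replace (2 * n - 2 * m - 2)%nat with (2 * (n - m - 1))%nat by lia. apply even_2m. }
    rewrite pow_add, (pow_m1_even j Ej). field.
  - rewrite (pow_m1_odd j Ej). field.
Qed.

Lemma PsiABBA n a b m : (2 <= n)%nat ->
  PsiAB n a b (2 * m) + PsiBA n a b (2 * m) =
  - Rbinom n 2 * (Rbinom (n - 2) m - Cm1 (n - 2) m) * a ^ (2 * n - 2 * m - 2) * b.
Proof.
  intros Hn. rewrite PsiAB_even, PsiBA_even by auto.
  assert (HBA : sum_up (fun j => (1 + (-1) ^ j) / 2 * ((-1) ^ j * (Rbinom (n - 2) j * Rbinom n (2 * m - j)))) (S (2 * m))
     = sum_up (fun j => (1 + (-1) ^ j) / 2 * ((-1) ^ j * (Rbinom n j * Rbinom (n - 2) (2 * m - j)))) (S (2 * m))).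
  { rewrite sum_up_rev. apply sum_up_ext. intros j Hj.
    replace (S (2 * m) - 1 - j)%nat with (2 * m - j)%nat by lia.
    replace (2 * m - (2 * m - j))%nat with j by lia.
    rewrite (pow_m1_same (2 * m - j) j). ring.
    replace (2 * m - j + j)%nat with (2 * m)%nat by lia. apply even_2m. }
  rewrite HBA.
  rewrite <- Rmult_plus_distr_l, <- sum_up_plus.
  rewrite (sum_up_ext _ (fun p => (-1) ^ p * Rbinom n p * Rbinom (n - 2) (2 * m - p))) by (intros; field).
  fold (fa n (n - 2) (2 * m)). pose proof (alt2 (n - 2) m) as Ha. replace (S (S (n - 2))) with n in Ha by lia. rewrite Ha.
  transitivity (- Rbinom n 2 * (Rbinom (n - 2) m - Cm1 (n - 2) m) * a ^ (2 * n - 2 * m - 2) * b * ((-1) ^ m * (-1) ^ m)).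
  ring. rewrite pow_m1_sq. ring.
Qed.

Lemma binom_1 n : binom n 1 = n.
Proof. induction n; auto. rewrite binom_S, binom_0_r, IHn. lia. Qed.

Lemma Rbinom_2 n : Rbinom n 2 = INR n * (INR n - 1) / 2.
Proof.
  destruct n. unfold Rbinom. simpl. field.
  pose proof (Rbinom_absorb n 1) as H. unfold Rbinom in *. rewrite binom_1 in H.
  replace (INR 2) with 2 in H by (simpl; ring).
  apply (Rmult_eq_reg_l 2); [|lra]. rewrite H, S_INR. field.
Qed.

Lemma binom_rel1 k m : INR (S k) * Rbinom k m = (INR (S k) - INR m) * Rbinom (S k) m.
Proof.
  destruct m. rewrite !Rbinom_0. simpl. ring.
  pose proof (Rbinom_absorb k m). rewrite Rbinom_S in *. lra.
Qed.

Lemma binom_rel2 k m : INR (S k) * Cm1 k m = INR m * Rbinom (S k) m.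
Proof. destruct m. simpl. ring. simpl Cm1. rewrite (Rbinom_absorb k m). ring. Qed.

Lemma coef_identity n m : (2 <= n)%nat -> (m < n)%nat ->
  INR (2 * n - 2 * m - 1) / 2 * INR n * Rbinom (n - 1) m - Rbinom n 2 * (Rbinom (n - 2) m - Cm1 (n - 2) m)
  = INR n ^ 2 / 2 * Rbinom (n - 1) m.
Proof.
  intros Hn Hm. destruct n as [|[|k]]; try lia.
  replace (S (S k) - 1)%nat with (S k) by lia. replace (S (S k) - 2)%nat with k by lia.
  pose proof (binom_rel1 k m) as H1. pose proof (binom_rel2 k m) as H2.
  rewrite Rbinom_2.
  replace (INR (2 * S (S k) - 2 * m - 1)) with (2 * INR (S (S k)) - 2 * INR m - 1).
  2:{ rewrite !minus_INR by lia. rewrite !mult_INR. simpl (INR 2). simpl (INR 1). ring. }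
  rewrite (S_INR (S k)) in *.
  replace ((INR (S k) + 1) * (INR (S k) + 1 - 1) / 2 * (Rbinom k m - Cm1 k m)) with
     (INR (S k + 1) / 2 * ((INR (S k)) * Rbinom k m - INR (S k) * Cm1 k m)).
  2:{ rewrite plus_INR. simpl (INR 1). field. }
  rewrite H1, H2. rewrite plus_INR. simpl (INR 1). field.
Qed.

Lemma h_regroup (cond : nat -> nat -> bool) (M : nat -> nat -> Ritem) N1 N2 a b u :
  (forall j k, mi (M j k) = Nat.div2 (j + k)) ->
  dsum N1 N2 (fun j k => if cond j k then itv (M j k) a b u else 0) =
  sum_up (fun N => (u (Nat.div2 N) * u (Nat.div2 N)) *
     sum_up (fun j => if Nat.ltb j N1 && Nat.ltb (N - j) N2 then
          (if cond j (N - j)%nat then cv (M j (N - j)%nat) a b else 0) else 0) (S N)) (N1 + N2).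
Proof.
  intros HM. rewrite <- (regroup (fun j k => if cond j k then cv (M j k) a b else 0) (fun m => u m * u m)).
  apply dsum_ext. intros j k _ _. destruct (cond j k). rewrite itv_cv, HM. auto. ring.
Qed.

Lemma hAA_Psi n a b u : hAA n a b u = sum_up (fun N => u (Nat.div2 N) * u (Nat.div2 N) * PsiAA n a b N) (S n + S n).
Proof. unfold hAA. rewrite h_regroup by (intros; apply mainit_wt). reflexivity. Qed.
Lemma hAB_Psi n a b u : hAB n a b u = sum_up (fun N => u (Nat.div2 N) * u (Nat.div2 N) * PsiAB n a b N) (S n + S (n - 2)).
Proof. unfold hAB. rewrite h_regroup by (intros; apply mainit_wt). reflexivity. Qed.
Lemma hBA_Psi n a b u : hBA n a b u = sum_up (fun N => u (Nat.div2 N) * u (Nat.div2 N) * PsiBA n a b N) (S (n - 2) + S n).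
Proof. unfold hBA. rewrite h_regroup by (intros; apply mainit_wt). reflexivity. Qed.

Lemma mains n a b u : (2 <= n)%nat ->
  hAA n a b u + hAB n a b u + hBA n a b u =
  sum_up (fun m => (INR n ^ 2 / 2 * Rbinom (n - 1) m * a ^ (2 * n - 2 * m - 2) * b) * (u m * u m)) n.
Proof.
  intros Hn.
  rewrite hAA_Psi, hAB_Psi, hBA_Psi.
  rewrite (pairs_trunc _ n (S n + S n)), (pairs_trunc _ n (S n + S (n - 2))), (pairs_trunc _ n (S (n - 2) + S n)).
  - rewrite <- !sum_up_plus. apply sum_up_ext. intros m Hm.
    rewrite div2_2m, div2_2m1, PsiAA_even, PsiAB_odd, PsiBA_odd, PsiAA_odd by lia.
    rewrite <- (coef_identity n m) by lia.
    transitivity (u m * u m * (INR (2 * n - 2 * m - 1) / 2 * INR n * Rbinom (n - 1) m * a ^ (2 * n - 2 * m - 2) * b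
       + (PsiAB n a b (2 * m) + PsiBA n a b (2 * m)))). ring.
    rewrite (PsiABBA n a b m) by lia. ring.
  - lia.
  - intros N HN. unfold PsiBA. rewrite (sum_up_ext _ (fun _ => 0)). rewrite sum_up_zero. ring.
    intros j Hj. destruct (Nat.ltb_spec j (S (n - 2))); destruct (Nat.ltb_spec (N - j) (S n)); simpl; auto; lia.
  - lia.
  - intros N HN. unfold PsiAB. rewrite (sum_up_ext _ (fun _ => 0)). rewrite sum_up_zero. ring.
    intros j Hj. destruct (Nat.ltb_spec j (S n)); destruct (Nat.ltb_spec (N - j) (S (n - 2))); simpl; auto; lia.
  - lia.
  - intros N HN. unfold PsiAA. rewrite (sum_up_ext _ (fun _ => 0)). rewrite sum_up_zero. ring.
    intros j Hj. destruct (Nat.ltb_spec j (S n)); destruct (Nat.ltb_spec (N - j) (S n)); simpl; auto; try lia.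
    assert (j = n) by lia. assert (N - j = n)%nat by lia. subst j. rewrite H2.
    unfold phiAA. rewrite odd_negb. destruct (Nat.even n); auto.
Qed.

Lemma is_derive_eqv (f : R -> R) (x l l' : R) : is_derive f x l -> l = l' -> is_derive f x l'.
Proof. intros H ->; auto. Qed.

Lemma is_derive_mulR (f g : R -> R) (x df dg : R) : is_derive f x df -> is_derive g x dg ->
  is_derive (fun y => f y * g y) x (df * g x + f x * dg).
Proof. intros H1 H2. apply (is_derive_mult f g x df dg H1 H2). intros; apply Rmult_comm. Qed.



Lemma ev_derive (A : R -> R) (Bc : R) (U : nat -> R -> R) x T :
  (forall y, is_derive A y Bc) -> (forall k y, is_derive (U k) y (U (S k) y)) ->
  is_derive (fun y => ev T (A y) Bc (fun k => U k y)) x (GvA (dT T) (A x) Bc (fun k => U k x)).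
Proof.
  intros HA HU. destruct T as [[[[c p] q] i] j]. simpl.
  assert (H1 : is_derive (fun y => c * A y ^ p) x (c * (INR p * Bc * A x ^ pred p))).
  { apply is_derive_scal. apply is_derive_pow. auto. }
  assert (H2 : is_derive (fun y => c * A y ^ p * Bc ^ q) x (c * (INR p * Bc * A x ^ pred p) * Bc ^ q)).
  { eapply is_derive_eqv. apply is_derive_mulR. exact H1. apply is_derive_const. simpl. unfold zero; simpl. ring. }
  assert (H3 : is_derive (fun y => c * A y ^ p * Bc ^ q * U i y) x
     (c * (INR p * Bc * A x ^ pred p) * Bc ^ q * U i x + c * A x ^ p * Bc ^ q * U (S i) x)).
  { eapply is_derive_eqv; [apply is_derive_mulR; [exact H2 | apply (HU i x)] | ]. cbv beta. ring. }
  eapply is_derive_eqv. apply is_derive_mulR. exact H3. apply HU.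
  destruct p; simpl; ring.
Qed.

Lemma GvA_derive (A : R -> R) (Bc : R) (U : nat -> R -> R) x G :
  (forall y, is_derive A y Bc) -> (forall k y, is_derive (U k) y (U (S k) y)) ->
  is_derive (fun y => GvA G (A y) Bc (fun k => U k y)) x (GvA (dG G) (A x) Bc (fun k => U k x)).
Proof.
  intros HA HU. induction G as [|T G IH].
  - apply (is_derive_const 0 x).
  - rewrite dG_cons, GvA_app. eapply is_derive_eqv.
    apply (is_derive_plus (fun y => ev T (A y) Bc (fun k => U k y)) (fun y => GvA G (A y) Bc (fun k => U k y))).
    apply ev_derive; auto. exact IH. reflexivity.
Qed.

Lemma ell_x_val x0 t0 beta lam t x : ell_x x0 t0 beta lam t x = 2 * lam * (x - x0).
Proof. unfold ell_x. apply is_derive_unique. unfold ell, psi. auto_derive; auto. ring. Qed.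

Lemma ell_xx_val x0 t0 beta lam t x : ell_xx x0 t0 beta lam t x = 2 * lam.
Proof.
  unfold ell_xx. simpl. rewrite (Derive_ext _ (fun y => 2 * lam * (y - x0))).
  apply is_derive_unique. auto_derive; auto. ring.
  intros y. apply ell_x_val.
Qed.

Lemma Ck2_derive_n : forall k K f, Ck2 (K + k) f -> Ck2 K (fun t x => Derive_n (fun y => f t y) k x).
Proof.
  induction k; intros K f H.
  - rewrite Nat.add_0_r in H. exact H.
  - replace (K + S k)%nat with (S K + k)%nat in H by lia.
    apply IHk in H. simpl in H. destruct H as [_ [_ [_ H]]]. exact H.
Qed.

Lemma dxn_derive w : smooth2 w -> forall k t y, is_derive (fun y => dxn w k t y) y (dxn w (S k) t y).
Proof.
  intros Hw k t y. unfold dxn. simpl.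
  assert (H : ex_derive (fun z => Derive_n (fun y => w t y) k z) y).
  { pose proof (Ck2_derive_n k 1 w (Hw _)) as H. simpl in H. destruct H as [_ [H _]]. apply (H t y). }
  destruct H as [l Hl]. pose proof (is_derive_unique _ _ _ Hl) as E. eapply is_derive_eqv; [exact Hl | symmetry; exact E].
Qed.

Definition Rm_of (rest : list Ritem) (m : nat) : poly2 :=
  map (fun it => let '(c, p, q, _) := it in (c, p, q)) (filter (fun it => Nat.eqb (mi it) m) rest).

Lemma restv_split n rest a b u : List.Forall (fun it => (mi it < n)%nat) rest ->
  restv rest a b u = sum_up (fun m => poly2_eval (Rm_of rest m) a b * (u m * u m)) n.
Proof.
  induction 1 as [|it L Hit HL IH].
  - simpl. rewrite (sum_up_ext _ (fun _ => 0)); [rewrite sum_up_zero; auto | intros; unfold Rm_of; simpl; ring].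
  - destruct it as [[[c p] q] m0]. simpl in Hit |- *. rewrite IH.
    rewrite (sum_up_ext (fun m => poly2_eval (Rm_of ((c, p, q, m0) :: L) m) a b * (u m * u m)) (fun m => (if Nat.eqb m m0 then c * a ^ p * b ^ q * (u m * u m) else 0)
          + poly2_eval (Rm_of L m) a b * (u m * u m))).
    + rewrite sum_up_plus. rewrite sum_up_ind. rewrite (proj2 (Nat.ltb_lt m0 n) Hit). ring.
    + intros m Hm. unfold Rm_of. simpl. rewrite (Nat.eqb_sym m0 m).
      destruct (Nat.eqb m m0) eqn:E; simpl.
      * apply Nat.eqb_eq in E. subst. ring.
      * ring.
Qed.

Lemma Gval_GvA G x0 t0 beta lam w t y :
  Gval G x0 t0 beta lam w t y = GvA G (ell_x x0 t0 beta lam t y) (ell_xx x0 t0 beta lam t y) (fun k => dxn w k t y).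
Proof.
  unfold Gval, GvA. induction G as [|T G IH]. reflexivity.
  destruct T as [[[[c p] q] i] j]. simpl. rewrite IH. reflexivity.
Qed.

Definition sumabs (P : poly2) : R := fold_right (fun m acc => let '(c, _, _) := m in Rabs c + acc) 0 P.

Lemma poly_bound (P : poly2) (K : nat) (X Y L : R) :
  (forall c p q, In (c, p, q) P -> (p + q <= K)%nat) -> 1 <= L -> Rabs X <= L -> Rabs Y <= L ->
  Rabs (poly2_eval P X Y) <= sumabs P * L ^ K.
Proof.
  intros HP HL HX HY. induction P as [|[[c p] q] P IH]; simpl.
  - rewrite Rabs_R0. lra.
  - assert (Hpq : (p + q <= K)%nat) by (apply (HP c); left; auto).
    assert (IH' : Rabs (poly2_eval P X Y) <= sumabs P * L ^ K) by (apply IH; intros; eapply HP; right; eauto).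
    eapply Rle_trans. apply Rabs_triang. rewrite Rmult_plus_distr_r.
    apply Rplus_le_compat; auto.
    rewrite !Rabs_mult, <- !RPow_abs. rewrite Rmult_assoc. apply Rmult_le_compat_l. apply Rabs_pos.
    eapply Rle_trans. apply Rmult_le_compat; try apply pow_le; try apply Rabs_pos.
    apply pow_incr; split; [apply Rabs_pos|exact HX]. apply pow_incr; split; [apply Rabs_pos|exact HY].
    rewrite <- pow_add. apply Rle_pow; auto.
Qed.

Lemma sumabs_ge0 P : 0 <= sumabs P.
Proof. induction P as [|[[c p] q] P IH]; simpl. lra. pose proof (Rabs_pos c). lra. Qed.

Lemma Rm_of_in rest m c p q : In (c, p, q) (Rm_of rest m) -> exists it, In it rest /\ mi it = m /\ wt it = (p + q)%nat.
Proof.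
  unfold Rm_of. intros H. apply in_map_iff in H. destruct H as [[[[c' p'] q'] m'] [E Hin]].
  inversion E; subst. apply filter_In in Hin. destruct Hin as [Hin Hm]. apply Nat.eqb_eq in Hm.
  exists (c, p, q, m'). simpl in *. auto.
Qed.

Close Scope bool_scope.
Open Scope R_scope.

Theorem proposition3p1 (n : nat) (Hn : (2 <= n)%nat) :
  exists (G : list Gterm) (Rm : nat -> poly2),
    (* the pointwise identity *)
    (forall (x0 t0 beta lam : R) (w : R -> R -> R),
        0 < beta -> 1 <= lam -> smooth2 w ->
        forall t x : R,
          I1 n x0 t0 beta lam w t x * I2 n x0 t0 beta lam w t x =
          Derive (fun y => Gval G x0 t0 beta lam w t y) x
          + sum_up (fun m =>
              ((INR n) ^ 2 / 2 * Rbinom (n - 1) m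
                 * ell_x x0 t0 beta lam t x ^ (2 * n - 2 * m - 2)
                 * ell_xx x0 t0 beta lam t x
               + poly2_eval (Rm m) (ell_x x0 t0 beta lam t x)
                                   (ell_xx x0 t0 beta lam t x))
              * (dxn w m t x) ^ 2) n) /\
    (* the bound on R_m on bounded sets, uniformly in lam >= 1 *)
    (forall (m : nat), (m < n)%nat ->
       forall (x0 t0 beta : R), 0 < beta ->
       forall M : R, exists C : R,
         forall (lam t x : R), 1 <= lam -> Rabs t <= M -> Rabs x <= M ->
           Rabs (poly2_eval (Rm m) (ell_x x0 t0 beta lam t x)
                                   (ell_xx x0 t0 beta lam t x))
           <= C * powerRZ lam (Z.of_nat (2 * n - 2 * m) - 3)).
Proof.
  destruct (decomp_all n Hn) as [G [rest [Hdec Hall]]].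
  exists G, (Rm_of rest). split.
  - intros x0 t0 beta lam w Hb Hl Hw t x.
    assert (HI : I1 n x0 t0 beta lam w t x * I2 n x0 t0 beta lam w t x =
       I1A n (ell_x x0 t0 beta lam t x) (ell_xx x0 t0 beta lam t x) (fun k => dxn w k t x) *
       I2A n (ell_x x0 t0 beta lam t x) (ell_xx x0 t0 beta lam t x) (fun k => dxn w k t x)) by reflexivity.
    rewrite HI, Hdec, mains by auto. clear HI.
    assert (HD : Derive (fun y => Gval G x0 t0 beta lam w t y) x =
       GvA (dG G) (ell_x x0 t0 beta lam t x) (ell_xx x0 t0 beta lam t x) (fun k => dxn w k t x)).
    { rewrite (Derive_ext _ (fun y => GvA G (2 * lam * (y - x0)) (2 * lam) (fun k => dxn w k t y))).
      2:{ intros y. rewrite Gval_GvA, ell_x_val, ell_xx_val. auto. }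
      apply is_derive_unique. rewrite ell_x_val, ell_xx_val.
      apply (GvA_derive (fun y => 2 * lam * (y - x0)) (2 * lam) (fun k y => dxn w k t y) x G).
      intros y. auto_derive; auto. ring.
      intros k y. apply dxn_derive; auto. }
    rewrite HD. rewrite (restv_split n).
    2:{ eapply List.Forall_impl; [|exact Hall]. intros it [_ H]. exact H. }
    rewrite (sum_up_ext (fun m => (INR n ^ 2 / 2 * Rbinom (n - 1) m * ell_x x0 t0 beta lam t x ^ (2 * n - 2 * m - 2) *
        ell_xx x0 t0 beta lam t x + poly2_eval (Rm_of rest m) (ell_x x0 t0 beta lam t x) (ell_xx x0 t0 beta lam t x)) *
        dxn w m t x ^ 2)
      (fun m => INR n ^ 2 / 2 * Rbinom (n - 1) m * ell_x x0 t0 beta lam t x ^ (2 * n - 2 * m - 2) *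
        ell_xx x0 t0 beta lam t x * (dxn w m t x * dxn w m t x) +
        poly2_eval (Rm_of rest m) (ell_x x0 t0 beta lam t x) (ell_xx x0 t0 beta lam t x) * (dxn w m t x * dxn w m t x))).
    2:{ intros; ring. }
    rewrite sum_up_plus. ring.
  - intros m Hm x0 t0 beta Hb M.
    set (B := 2 * (Rabs M + Rabs x0) + 2).
    destruct (Nat.le_gt_cases 3 (2 * n - 2 * m)) as [H3|H3].
    + exists (sumabs (Rm_of rest m) * B ^ (2 * n - 2 * m - 3)).
      intros lam t x Hl Ht Hx.
      assert (HB : 2 <= B) by (unfold B; pose proof (Rabs_pos M); pose proof (Rabs_pos x0); lra).
      eapply Rle_trans. apply (poly_bound _ (2 * n - 2 * m - 3) _ _ (lam * B)).
      * intros c p q Hin. destruct (Rm_of_in _ _ _ _ _ Hin) as [it [Hit [Hmi Hwt]]].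
        rewrite List.Forall_forall in Hall. destruct (Hall it Hit) as [HP _]. lia.
      * nra.
      * rewrite ell_x_val. rewrite Rabs_mult, Rabs_mult. rewrite (Rabs_right 2) by lra. rewrite (Rabs_right lam) by lra.
        assert (Rabs (x - x0) <= Rabs M + Rabs x0).
        { eapply Rle_trans. apply Rabs_triang. rewrite Rabs_Ropp. pose proof (Rle_abs M). lra. }
        unfold B. nra.
      * rewrite ell_xx_val. rewrite Rabs_mult. rewrite (Rabs_right 2) by lra. rewrite (Rabs_right lam) by lra. unfold B.
        pose proof (Rabs_pos M); pose proof (Rabs_pos x0). nra.
      * replace (Z.of_nat (2 * n - 2 * m) - 3)%Z with (Z.of_nat (2 * n - 2 * m - 3)) by lia.
        rewrite <- pow_powerRZ. rewrite Rpow_mult_distr.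
        pose proof (sumabs_ge0 (Rm_of rest m)). pose proof (pow_le B (2 * n - 2 * m - 3)).
        pose proof (pow_le lam (2 * n - 2 * m - 3)). nra.
    + exists 0. intros lam t x Hl Ht Hx.
      replace (Rm_of rest m) with (@nil (R * nat * nat)).
      * simpl. rewrite Rabs_R0. lra.
      * destruct (Rm_of rest m) as [|[[c p] q] P] eqn:E; auto.
        destruct (Rm_of_in rest m c p q) as [it [Hit [Hmi Hwt]]]. rewrite E. left; auto.
        rewrite List.Forall_forall in Hall. destruct (Hall it Hit) as [HP _]. lia.
Qed.
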